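(* The set $\mathtt{SUR}$ of surjective cellular automata is dense in $\mathtt{CA}$ equipped with the pointwise topology. Equivalently: for every $c\in\mathtt{CA}$ and every finite set $X\subseteq\Sigma^\mathbb{Z}$ there is a surjective $d\in\mathtt{CA}$ with $d(x)_0=c(x)_0$ for all $x\in X$.
   Context: $\Sigma$ is a finite alphabet with $|\Sigma|\ge 2$, and $\Sigma^\mathbb{Z}$ carries the product (Cantor) topology. The shift $\sigma$ is $\sigma(x)_i=x_{i+1}$. A cellular automaton (CA) is a continuous map $c:\Sigma^\mathbb{Z}\to\Sigma^\mathbb{Z}$ with $c\circ\sigma=\sigma\circ c$; $\mathtt{CA}$ is the set of all CA, $\mathtt{SUR}\subseteq\mathtt{CA}$ the surjective ones. The pointwise topology on $\mathtt{CA}$ is generated by the subbase $U_x(a)=\{c\in\mathtt{CA}\mid c(x)_0=a\}$, $x\in\Sigma^\mathbb{Z}$, $a\in\Sigma$. *)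

(* Defs.v *)
From mathcomp Require Import all_boot.
From Stdlib Require Import ZArith.
Set Implicit Arguments. Unset Strict Implicit. Unset Printing Implicit Defensive.

Definition config (S : Type) := Z -> S.

Definition shift (S : Type) (x : config S) : config S := fun i => (x (i + 1))%Z.

(* Continuity of F : S^Z -> S^Z for the product (Cantor) topology with discrete
   finite S: every output coordinate i is determined, near x, by finitely many
   input coordinates (a window [-n,n]). *)
Definition cantor_continuous (S : Type) (F : config S -> config S) : Prop :=
  forall (x : config S) (i : Z), exists n : nat,
    forall y : config S,
      (forall j : Z, (Z.abs j <= Z.of_nat n)%Z -> y j = x j) -> F y i = F x i.

Definition is_CA (S : Type) (F : config S -> config S) : Prop :=
  cantor_continuous F /\ forall x : config S, F (shift x) = shift (F x).

Definition surjective_map (S : Type) (F : config S -> config S) : Prop :=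
  forall y : config S, exists x : config S, F x = y.

(* Main.v *)
Require Import Defs.
From mathcomp Require Import all_boot.
From Stdlib Require Import ZArith List.
From mathcomp Require Import all_algebra.
From mathcomp Require Import zify.
From Stdlib Require Import Classical FunctionalExtensionality.
Import GRing.Theory.
Delimit Scope Z_scope with Z.

Section Ext.
Variables (S : Type) (zero : S) (L : nat) (h : (nat -> S) -> nat -> S).
Fixpoint st (k : nat) : nat -> S :=
  match k with
  | 0 => fun _ => zero
  | k'.+1 => fun p => if p < L.-1 then st k' p.+1 else h (st k') k'
  end.
Lemma stA p k : p < L -> st k p = st (k + p) 0.
Proof.
elim: p k => [|p IH] k hp; first by rewrite addn0.
have -> : st k p.+1 = st k.+1 p by rewrite /= ifT //; lia.
rewrite IH; [by rewrite addSnnS | lia].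
Qed.
Lemma ext_ok : 0 < L ->
  (forall w w' k, (forall p, p < L -> w p = w' p) -> h w k = h w' k) ->
  exists z : nat -> S, (forall p, p < L -> z p = zero) /\
    forall k, z (k + L) = h (fun p => z (k + p)) k.
Proof.
move=> L0 hext; exists (fun k => st k 0); split.
- move=> p hp. by rewrite -[p]add0n -stA.
- move=> k. have e: k + L = (k.+1) + L.-1 by lia.
  rewrite e -stA; last lia. rewrite /= ltnn. apply hext => p hp; exact: stA.
Qed.
End Ext.

Section Main.
Variables (S : eqType) (add : S -> S -> S) (opp : S -> S) (zero : S).
Hypothesis H1 : forall a b y, add a (add b (add (opp (add a b)) y)) = y.
Hypothesis H2 : forall a b y, add a (add (add (opp (add a b)) y) b) = y.
Hypothesis H3 : forall a v, add (add (opp a) v) a = v.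
Variables (c : config S -> config S) (X : list (config S)) (n : nat).
Hypothesis hn : 0 < n.

Definition W (x : config S) (i : Z) : nat -> S :=
  fun p => x (i - Z.of_nat n + Z.of_nat p)%Z.
Definition mid (w : nat -> S) := [seq w p | p <- iota 1 (2 * n - 1)].
Definition ends (w : nat -> S) := add (w 0) (w (2 * n)).
Definition g (m : list S) :=
  match List.find (fun x' => mid (W x' 0) == m) X with
  | Some x' => add (opp (ends (W x' 0))) (c x' 0%Z)
  | None => zero end.
Definition Fw w := add (g (mid w)) (ends w).
Definition dd (x : config S) : config S := fun i => Fw (W x i).

Hypothesis hsep : forall x x', List.In x X -> List.In x' X ->
  mid (W x 0) = mid (W x' 0) -> x = x'.

Lemma Fw_ext w w' : (forall p, p <= 2 * n -> w p = w' p) -> Fw w = Fw w'.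
Proof.
move=> E. rewrite /Fw /ends.
have -> : mid w = mid w'.
  apply/eq_in_map => p; rewrite mem_iota => /andP[h1 h2]; apply: E; lia.
by rewrite (E 0) ?(E (2 * n)).
Qed.

Lemma dd_CA : is_CA dd.
Proof.
split.
- move=> x i. exists (Z.abs_nat i + n) => y hy. rewrite /dd.
  apply: Fw_ext => p hp. rewrite /W. apply hy. lia.
- move=> x. apply functional_extensionality => i. rewrite /dd /Defs.shift /=.
  congr Fw. apply functional_extensionality => p. rewrite /W.
  f_equal. lia.
Qed.

Lemma dd_agree x : List.In x X -> dd x 0%Z = c x 0%Z.
Proof.
move=> hx. rewrite /dd /Fw /g.
case E: (List.find _ X) => [x'|].
- have [inx' /eqP ke] := List.find_some _ _ E.
  have xx : x' = x by apply: hsep.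
  by rewrite xx H3.
- have := List.find_none _ _ E x hx. by rewrite eqxx.
Qed.

Lemma dd_surj : surjective_map dd.
Proof.
move=> y.
pose hR (v : nat -> S) (k : nat) :=
  add (opp (add (g (mid v)) (v 0))) (y (Z.of_nat k + Z.of_nat n)%Z).
pose hL (v : nat -> S) (k : nat) :=
  add (opp (add (g [seq v (2 * n - p) | p <- iota 1 (2 * n - 1)]) (v 0)))
      (y (Z.of_nat n - Z.of_nat k - 1)%Z).
have [xr [zR1 zR2]] : exists z : nat -> S, (forall p, p < 2 * n -> z p = zero) /\
    forall k, z (k + 2 * n) = hR (fun p => z (k + p)) k.
  apply: ext_ok; first lia.
  move=> w w' k E; rewrite /hR /mid (E 0); last lia.
  congr (add (opp (add (g _) _)) _).
  apply/eq_in_map => p; rewrite mem_iota => /andP[h1 h2]; apply: E; lia.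
have [xl [zL1 zL2]] : exists z : nat -> S, (forall p, p < 2 * n -> z p = zero) /\
    forall k, z (k + 2 * n) = hL (fun p => z (k + p)) k.
  apply: ext_ok; first lia.
  move=> w w' k E; rewrite /hL (E 0); last lia.
  congr (add (opp (add (g _) _)) _).
  apply/eq_in_map => p; rewrite mem_iota => /andP[h1 h2]; apply: E; lia.
pose x := fun j : Z => if (0 <=? j)%Z then xr (Z.to_nat j)
                      else xl (Z.to_nat (2 * Z.of_nat n - 1 - j)).
exists x. apply functional_extensionality => i. rewrite /dd.
case: (Z.leb_spec (Z.of_nat n) i) => hi.
- pose k := Z.to_nat (i - Z.of_nat n).
  transitivity (Fw (fun p => xr (k + p))).
    apply: Fw_ext => p hp. rewrite /W /x.
    have -> : (0 <=? i - Z.of_nat n + Z.of_nat p)%Z = true by apply/Z.leb_le; lia.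
    f_equal. rewrite /k. lia.
  rewrite /Fw /ends (zR2 k) /hR H1. congr y. rewrite /k. lia.
- pose k := Z.to_nat (Z.of_nat n - i - 1).
  transitivity (Fw (fun p => xl (k + 2 * n - p))).
    apply: Fw_ext => p hp. rewrite /W /x.
    case: (Z.leb_spec 0 (i - Z.of_nat n + Z.of_nat p)) => hp2.
      rewrite zR1; last lia. rewrite zL1 //. rewrite /k. lia.
    f_equal. rewrite /k. lia.
  rewrite /Fw /ends subn0 addnK.
  have hz := zL2 k. rewrite /hL addn0 in hz.
  have -> : mid (fun p => xl (k + 2 * n - p)) =
      [seq xl (k + (2 * n - p)) | p <- iota 1 (2 * n - 1)].
    apply/eq_in_map => p; rewrite mem_iota => /andP[h1 h2]. f_equal. lia.
  rewrite hz H2. congr y. rewrite /k. lia.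
Qed.

End Main.

Lemma sep_pair (S : Type) (a b : config S) :
  exists N : nat, (forall j, (Z.abs j <= Z.of_nat N)%Z -> a j = b j) -> a = b.
Proof.
case: (classic (a = b)) => [ab|nab]; first by exists 0.
have [j hj] : exists j, a j <> b j.
  apply: NNPP => H. apply: nab. apply: functional_extensionality => j.
  apply: NNPP => H'. apply: H. by exists j.
exists (Z.abs_nat j) => H. exfalso. apply: hj. apply: H. lia.
Qed.

Lemma sep_one (S : Type) (a : config S) (Y : list (config S)) :
  exists N : nat, forall x', List.In x' Y ->
    (forall j, (Z.abs j <= Z.of_nat N)%Z -> a j = x' j) -> a = x'.
Proof.
elim: Y => [|b Y [N3 IH3]]; first by exists 0.
have [N4 h4] := sep_pair _ a b.
exists (maxn N3 N4) => x' [<-|hx'] H.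
  apply: h4 => j hj; apply: H; lia.
apply: IH3 => // j hj; apply: H; lia.
Qed.

Lemma sep_lists (S : Type) (X Y : list (config S)) :
  exists N : nat, forall x x', List.In x X -> List.In x' Y ->
    (forall j, (Z.abs j <= Z.of_nat N)%Z -> x j = x' j) -> x = x'.
Proof.
elim: X => [|a X [N1 IH1]]; first by exists 0.
have [N2 IH2] := sep_one _ a Y.
exists (maxn N1 N2) => x x' [<-|hx] hx' H.
  apply: IH2 => // j hj; apply: H; lia.
apply: IH1 => // j hj; apply: H; lia.
Qed.

Theorem proposition3p3 (Sigma : finType) (hSigma : 1 < #|Sigma|)
  (c : config Sigma -> config Sigma) (hc : is_CA c)
  (X : list (config Sigma)) :
  exists d : config Sigma -> config Sigma,
    is_CA d /\ surjective_map d /\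
    (forall x, List.In x X -> d x 0%Z = c x 0%Z).
Proof.
have [k' hk] : exists k', #|Sigma| = k'.+1 by exists #|Sigma|.-1; lia.
pose e (a : Sigma) : 'I_k'.+1 := cast_ord hk (enum_rank a).
pose e' (i : 'I_k'.+1) : Sigma := enum_val (cast_ord (esym hk) i).
have e'K : forall a, e' (e a) = a by move=> a; rewrite /e /e' cast_ordK enum_rankK.
have eK : forall i, e (e' i) = i by move=> i; rewrite /e /e' enum_valK cast_ordKV.
pose add a b := e' (e a + e b)%R.
pose opp a := e' (- e a)%R.
have H1 : forall a b y, add a (add b (add (opp (add a b)) y)) = y.
  move=> a b y; rewrite /add /opp !eK -[RHS]e'K; congr e'.
  by rewrite addrA (addKr, addNKr).
have H2 : forall a b y, add a (add (add (opp (add a b)) y) b) = y.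
  move=> a b y; rewrite /add /opp !eK -[RHS]e'K; congr e'.
  by rewrite [(_ + e y + e b)%R]addrC addrA (addKr, addNKr).
have H3 : forall a v, add (add (opp a) v) a = v.
  move=> a v; rewrite /add /opp !eK -[RHS]e'K; congr e'.
  by rewrite addrC (addKr, addNKr).
have [N hN] := sep_lists _ X X.
pose n := N.+1.
have hsep : forall x x', List.In x X -> List.In x' X ->
    mid _ n (W _ n x 0) = mid _ n (W _ n x' 0) -> x = x'.
  move=> x x' hx hx' /eq_in_map E. apply: hN => // j hj.
  have := E (Z.to_nat (j + Z.of_nat n)).
  rewrite mem_iota /W.
  have -> : (0 - Z.of_nat n + Z.of_nat (Z.to_nat (j + Z.of_nat n)))%Z = j by lia.
  apply. apply/andP; split; lia.
exists (dd _ add opp (e' 0%R) c X n); split; [|split].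
- exact: dd_CA.
- by apply: dd_surj.
- move=> x hx. exact: dd_agree.
Qed.
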